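(* Let $t_\varepsilon$, $t$, $s_\varepsilon$, $s$ be as defined below. Then $\partial_Ut_\varepsilon\to\partial_Ut$ and $\partial_Us_\varepsilon\to\partial_Us$ as $\varepsilon\to0$, uniformly on compact subsets of $\{(U,X^1,X^2,V)\in\mathbb{R}^4: U\neq0\}=(\mathbb{R}\setminus\{0\})\times\mathbb{R}^3$.
   Context: Strict delta net: a net $(\delta_\varepsilon)_{\varepsilon\in(0,1]}$ of smooth compactly supported functions on $\mathbb{R}$ with $\operatorname{supp}\delta_\varepsilon\subseteq[-\varepsilon,\varepsilon]$, $\int\delta_\varepsilon\to1$ as $\varepsilon\to0$, and $\int|\delta_\varepsilon|\le C$ for some $C>0$ and small $\varepsilon$. The transformations: fix $f\in C^\infty(\mathbb{R}^2,\mathbb{R})$ and a strict delta net $(\delta_\varepsilon)_\varepsilon$; write $X=(X^1,X^2)$. Let $(x_\varepsilon)_\varepsilon=(x_\varepsilon^1,x_\varepsilon^2)_\varepsilon\in C^\infty(\mathbb{R}^2\times\mathbb{R},\mathbb{R}^2)^{(0,1]}$ be a fixed net such that for every compact $K\subseteq\mathbb{R}^2$ there is $\varepsilon_K$ such that for all $X\in K$ and $\varepsilon\le\varepsilon_K$, $U\mapsto x_\varepsilon(X,U)$ is the solution on all of $\mathbb{R}$ of $\partial_U^2x_\varepsilon^i(X,U)=\frac12\partial_if(x_\varepsilon(X,U))\,\delta_\varepsilon(U)$, $x_\varepsilon^i(X,-1)=X^i$, $\partial_Ux_\varepsilon^i(X,-1)=0$ ($i=1,2$) (such a net exists). Write $\dot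 x_\varepsilon^i=\partial_U x_\varepsilon^i$. Define $$w_\varepsilon(X,V,U)=V+\int_{-\varepsilon}^U\int_{-\varepsilon}^s\sum_{i=1}^2\partial_if(x_\varepsilon(X,r))\,\dot x_\varepsilon^i(X,r)\,\delta_\varepsilon(r)\,dr\,ds,\qquad v_\varepsilon(X,V,U)=w_\varepsilon(X,V,U)+\int_{-\varepsilon}^U f(x_\varepsilon(X,s))\delta_\varepsilon(s)\,ds,$$ $t_\varepsilon(U,X^1,X^2,V)=(U,x_\varepsilon^1(X,U),x_\varepsilon^2(X,U),v_\varepsilon(X,V,U))$ and $s_\varepsilon(U,X^1,X^2,V)=(U,x_\varepsilon^1(X,U),x_\varepsilon^2(X,U),w_\varepsilon(X,V,U))$. The limits: with $U_+=\max(U,0)$ and $H$ the Heaviside function ($H(U)=0$ for $U<0$, $H(U)=1$ for $U>0$), $x^i(X,U)=X^i+\frac12\partial_if(X)\,U_+$, $v(X,V,U)=V+f(X)H(U)+\frac14\sum_{i=1}^2(\partial_if(X))^2U_+$, $w(X,V,U)=V+\frac14\sum_{i=1}^2(\partial_if(X))^2U_+$, $t(U,X^1,X^2,V)=(U,x^1(X,U),x^2(X,U),v(X,V,U))$, $s(U,X^1,X^2,V)=(U,x^1(X,U),x^2(X,U),w(X,V,U))$; these are smooth for $U\ne0$. *)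

(* Defs.v *)
From Stdlib Require Import Reals List ClassicalEpsilon.
Open Scope R_scope.

(** Derivative operator: the derivative of g at u when it exists
    (unique by uniqueness of limits), an arbitrary value otherwise. *)
Definition Deriv (g : R -> R) (u : R) : R :=
  epsilon (inhabits 0) (fun l => derivable_pt_lim g u l).

(** Oriented Riemann integral int_a^b g (unspecified if g is not Riemann integrable;
    all integrands used below are continuous). RiemannInt does not depend on
    the integrability proof. *)
Definition Rint (g : R -> R) (a b : R) : R :=
  epsilon (inhabits 0)
    (fun I => exists pr : Riemann_integrable g a b, RiemannInt pr = I).

Fixpoint Ck1 (k : nat) (g : R -> R) : Prop :=
  match k with
  | O => continuity g
  | S k' => (forall u, derivable_pt_lim g u (Deriv g u)) /\ Ck1 k' (Deriv g)
  end.
Definition smooth1 (g : R -> R) : Prop := forall k, Ck1 k g.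

Definition P1_2 (f : R -> R -> R) (a b : R) : R := Deriv (fun s => f s b) a.
Definition P2_2 (f : R -> R -> R) (a b : R) : R := Deriv (fun s => f a s) b.

Definition cont2 (f : R -> R -> R) : Prop :=
  forall a b eta, 0 < eta -> exists d, 0 < d /\
    forall a' b', Rabs (a' - a) < d -> Rabs (b' - b) < d ->
      Rabs (f a' b' - f a b) < eta.

Fixpoint Ck2 (k : nat) (f : R -> R -> R) : Prop :=
  match k with
  | O => cont2 f
  | S k' =>
      (forall a b, derivable_pt_lim (fun s => f s b) a (P1_2 f a b)) /\
      (forall a b, derivable_pt_lim (fun s => f a s) b (P2_2 f a b)) /\
      Ck2 k' (P1_2 f) /\ Ck2 k' (P2_2 f)
  end.
Definition smooth2 (f : R -> R -> R) : Prop := forall k, Ck2 k f.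

Definition P1_3 (g : R -> R -> R -> R) (a b c : R) : R := Deriv (fun s => g s b c) a.
Definition P2_3 (g : R -> R -> R -> R) (a b c : R) : R := Deriv (fun s => g a s c) b.
Definition P3_3 (g : R -> R -> R -> R) (a b c : R) : R := Deriv (fun s => g a b s) c.

Definition cont3 (g : R -> R -> R -> R) : Prop :=
  forall a b c eta, 0 < eta -> exists d, 0 < d /\
    forall a' b' c', Rabs (a' - a) < d -> Rabs (b' - b) < d -> Rabs (c' - c) < d ->
      Rabs (g a' b' c' - g a b c) < eta.

Fixpoint Ck3 (k : nat) (g : R -> R -> R -> R) : Prop :=
  match k with
  | O => cont3 g
  | S k' =>
      (forall a b c, derivable_pt_lim (fun s => g s b c) a (P1_3 g a b c)) /\
      (forall a b c, derivable_pt_lim (fun s => g a s c) b (P2_3 g a b c)) /\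
      (forall a b c, derivable_pt_lim (fun s => g a b s) c (P3_3 g a b c)) /\
      Ck3 k' (P1_3 g) /\ Ck3 k' (P2_3 g) /\ Ck3 k' (P3_3 g)
  end.
Definition smooth3 (g : R -> R -> R -> R) : Prop := forall k, Ck3 k g.

Definition strict_delta_net (delta : R -> R -> R) : Prop :=
  (forall e, 0 < e <= 1 ->
     smooth1 (delta e) /\ (forall u, (u < - e \/ e < u) -> delta e u = 0)) /\
  (forall eta, 0 < eta -> exists e0, 0 < e0 /\
     forall e, 0 < e <= 1 -> e < e0 -> Rabs (Rint (delta e) (- e) e - 1) < eta) /\
  (exists C, 0 < C /\ exists e1, 0 < e1 /\
     forall e, 0 < e <= 1 -> e < e1 ->
       Rint (fun u => Rabs (delta e u)) (- e) e <= C).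

Definition compact_in {T : Type} (d : T -> T -> R) (K : T -> Prop) : Prop :=
  forall (I : Type) (O : I -> T -> Prop),
    (forall i p, O i p -> exists r, 0 < r /\ forall q, d p q < r -> O i q) ->
    (forall p, K p -> exists i, O i p) ->
    exists l : list I, forall p, K p -> exists i, In i l /\ O i p.

Definition dist2 (p q : R * R) : R :=
  Rmax (Rabs (fst p - fst q)) (Rabs (snd p - snd q)).

Definition pt4 : Type := (R * R * R * R)%type.
Definition pU (p : pt4) : R := let '(a, _, _, _) := p in a.
Definition pX1 (p : pt4) : R := let '(_, a, _, _) := p in a.
Definition pX2 (p : pt4) : R := let '(_, _, a, _) := p in a.
Definition pV (p : pt4) : R := let '(_, _, _, a) := p in a.
Definition dist4 (p q : pt4) : R :=
  Rmax (Rmax (Rabs (pU p - pU q)) (Rabs (pX1 p - pX1 q)))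
       (Rmax (Rabs (pX2 p - pX2 q)) (Rabs (pV p - pV q))).

Definition dU4 (F : pt4 -> pt4) (p : pt4) : pt4 :=
  let '(U, X1, X2, V) := p in
  (Deriv (fun u => pU (F (u, X1, X2, V))) U,
   Deriv (fun u => pX1 (F (u, X1, X2, V))) U,
   Deriv (fun u => pX2 (F (u, X1, X2, V))) U,
   Deriv (fun u => pV (F (u, X1, X2, V))) U).

Definition unif_cv_on_compacts (G : R -> pt4 -> pt4) (g : pt4 -> pt4)
    (Dom : pt4 -> Prop) : Prop :=
  forall K, compact_in dist4 K -> (forall p, K p -> Dom p) ->
  forall eta, 0 < eta -> exists e0, 0 < e0 /\
    forall e p, 0 < e <= 1 -> e < e0 -> K p -> dist4 (G e p) (g p) < eta.

Section Transf.
Variables (f : R -> R -> R) (delta : R -> R -> R) (x1 x2 : R -> R -> R -> R -> R).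
(* x1 e X1 X2 U = x_eps^1(X, U), similarly x2 *)

Definition w_eps (e X1 X2 V U : R) : R :=
  V + Rint (fun s => Rint (fun r =>
        (P1_2 f (x1 e X1 X2 r) (x2 e X1 X2 r) * Deriv (x1 e X1 X2) r +
         P2_2 f (x1 e X1 X2 r) (x2 e X1 X2 r) * Deriv (x2 e X1 X2) r) * delta e r)
        (- e) s) (- e) U.

Definition v_eps (e X1 X2 V U : R) : R :=
  w_eps e X1 X2 V U +
  Rint (fun s => f (x1 e X1 X2 s) (x2 e X1 X2 s) * delta e s) (- e) U.

Definition t_eps (e : R) (p : pt4) : pt4 :=
  let '(U, X1, X2, V) := p in
  (U, x1 e X1 X2 U, x2 e X1 X2 U, v_eps e X1 X2 V U).

Definition s_eps (e : R) (p : pt4) : pt4 :=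
  let '(U, X1, X2, V) := p in
  (U, x1 e X1 X2 U, x2 e X1 X2 U, w_eps e X1 X2 V U).

Definition solves_ode (e X1 X2 : R) : Prop :=
  (forall U, derivable_pt_lim (Deriv (x1 e X1 X2)) U
               (/ 2 * P1_2 f (x1 e X1 X2 U) (x2 e X1 X2 U) * delta e U)) /\
  (forall U, derivable_pt_lim (Deriv (x2 e X1 X2)) U
               (/ 2 * P2_2 f (x1 e X1 X2 U) (x2 e X1 X2 U) * delta e U)) /\
  x1 e X1 X2 (-1) = X1 /\ x2 e X1 X2 (-1) = X2 /\
  Deriv (x1 e X1 X2) (-1) = 0 /\ Deriv (x2 e X1 X2) (-1) = 0.
End Transf.

Definition Uplus (U : R) : R := Rmax U 0.
(* Heaviside; the value at 0 is irrelevant (only U <> 0 is used) *)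
Definition Heav (U : R) : R := if Rlt_dec 0 U then 1 else 0.

Definition x1_lim (f : R -> R -> R) (X1 X2 U : R) : R := X1 + / 2 * P1_2 f X1 X2 * Uplus U.
Definition x2_lim (f : R -> R -> R) (X1 X2 U : R) : R := X2 + / 2 * P2_2 f X1 X2 * Uplus U.
Definition w_lim (f : R -> R -> R) (X1 X2 V U : R) : R :=
  V + / 4 * ((P1_2 f X1 X2) ^ 2 + (P2_2 f X1 X2) ^ 2) * Uplus U.
Definition v_lim (f : R -> R -> R) (X1 X2 V U : R) : R :=
  V + f X1 X2 * Heav U + / 4 * ((P1_2 f X1 X2) ^ 2 + (P2_2 f X1 X2) ^ 2) * Uplus U.

Definition t_lim (f : R -> R -> R) (p : pt4) : pt4 :=
  let '(U, X1, X2, V) := p in (U, x1_lim f X1 X2 U, x2_lim f X1 X2 U, v_lim f X1 X2 V U).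
Definition s_lim (f : R -> R -> R) (p : pt4) : pt4 :=
  let '(U, X1, X2, V) := p in (U, x1_lim f X1 X2 U, x2_lim f X1 X2 U, w_lim f X1 X2 V U).

(* Main.v *)
Require Import Defs.
From Stdlib Require Import Reals Lra List ClassicalEpsilon Classical.
Open Scope R_scope.

Lemma Deriv_unique g u l : derivable_pt_lim g u l -> Deriv g u = l.
Proof.
  intros H. unfold Deriv.
  assert (Hex: exists l, derivable_pt_lim g u l) by eauto.
  pose proof (epsilon_spec (inhabits 0) _ Hex) as Hs.
  eapply uniqueness_limite; eauto.
Qed.

Lemma dpl_plus g h u a b : derivable_pt_lim g u a -> derivable_pt_lim h u b ->
  derivable_pt_lim (fun x => g x + h x) u (a + b).
Proof. intros; exact (derivable_pt_lim_plus _ _ _ _ _ H H0). Qed.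
Lemma dpl_minus g h u a b : derivable_pt_lim g u a -> derivable_pt_lim h u b ->
  derivable_pt_lim (fun x => g x - h x) u (a - b).
Proof. intros; exact (derivable_pt_lim_minus _ _ _ _ _ H H0). Qed.
Lemma dpl_mult g h u a b : derivable_pt_lim g u a -> derivable_pt_lim h u b ->
  derivable_pt_lim (fun x => g x * h x) u (a * h u + g u * b).
Proof. intros. pose proof (derivable_pt_lim_mult _ _ _ _ _ H H0). unfold mult_fct in H1.
  replace (a * h u + g u * b) with (a * h u + g u * b) by ring. 
  eapply derivable_pt_lim_ext; [|exact H1]. intros; reflexivity. Qed.
Lemma dpl_const c u : derivable_pt_lim (fun _ => c) u 0.
Proof. exact (derivable_pt_lim_const c u). Qed.
Lemma dpl_id u : derivable_pt_lim (fun x => x) u 1.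
Proof. exact (derivable_pt_lim_id u). Qed.
Lemma dpl_scal c g u a : derivable_pt_lim g u a -> derivable_pt_lim (fun x => c * g x) u (c * a).
Proof. intros; exact (derivable_pt_lim_scal _ _ _ _ H). Qed.
Lemma dpl_eq g u a b : derivable_pt_lim g u a -> a = b -> derivable_pt_lim g u b.
Proof. intros; subst; auto. Qed.
Lemma dpl_ext g h u a : (forall x, g x = h x) -> derivable_pt_lim g u a -> derivable_pt_lim h u a.
Proof. intros; eapply derivable_pt_lim_ext; eauto. Qed.

Lemma cont_pt_eps g x : continuity_pt g x -> forall eps, 0 < eps ->
  exists d, 0 < d /\ forall y, Rabs (y - x) < d -> Rabs (g y - g x) < eps.
Proof.
  intros H eps He. destruct (H eps He) as [d [Hd H1]]. exists d; split; auto.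
  intros y Hy. destruct (Req_dec y x) as [->|Hne].
  - rewrite Rminus_diag, Rabs_R0; auto.
  - apply (H1 y). split; [split; [exact I| auto]|]. exact Hy.
Qed.

Lemma eps_cont_pt g x : (forall eps, 0 < eps ->
  exists d, 0 < d /\ forall y, Rabs (y - x) < d -> Rabs (g y - g x) < eps) -> continuity_pt g x.
Proof.
  intros H eps He. destruct (H eps He) as [d [Hd H1]]. exists d; split; auto.
  intros y [_ Hy]. apply H1. exact Hy.
Qed.

Lemma CMP P Q p q a b : a <= b ->
  (forall u, a <= u <= b -> derivable_pt_lim P u (p u)) ->
  (forall u, a <= u <= b -> derivable_pt_lim Q u (q u)) ->
  (forall u, a < u < b -> Rabs (p u) <= q u) ->
  Rabs (P b - P a) <= Q b - Q a.
Proof.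
  intros Hab HP HQ Hpq. destruct (Req_dec a b) as [->|Hne].
  - rewrite !Rminus_diag, Rabs_R0; lra.
  - assert (Hlt: a < b) by lra.
    destruct (MVT_cor2 (fun x => Q x - P x) (fun x => q x - p x) a b Hlt) as [c [Hc1 Hc2]].
    { intros c0 Hc0. apply dpl_minus; auto. }
    destruct (MVT_cor2 (fun x => Q x + P x) (fun x => q x + p x) a b Hlt) as [c' [Hc1' Hc2']].
    { intros c0 Hc0. apply dpl_plus; auto. }
    pose proof (Hpq c Hc2). pose proof (Hpq c' Hc2').
    revert H H0. unfold Rabs; destruct (Rcase_abs (p c)); destruct (Rcase_abs (p c'));
    destruct (Rcase_abs (P b - P a)); intros; nra.
Qed.

Lemma CONST P p a b : a <= b ->
  (forall u, a <= u <= b -> derivable_pt_lim P u (p u)) ->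
  (forall u, a < u < b -> p u = 0) -> P b = P a.
Proof.
  intros Hab HP H0.
  pose proof (CMP P (fun _ => 0) p (fun _ => 0) a b Hab HP (fun u _ => dpl_const 0 u)) as H.
  assert (Rabs (P b - P a) <= 0 - 0).
  { apply H. intros u Hu. rewrite H0; auto. rewrite Rabs_R0; lra. }
  pose proof (Rabs_pos (P b - P a)). assert (Rabs (P b - P a) = 0) by lra.
  revert H3; unfold Rabs; destruct (Rcase_abs (P b - P a)); lra.
Qed.

Lemma CI (g : R -> R) a b rho : a <= b -> (forall r, a <= r <= b -> continuity_pt g r) ->
  g a < rho ->
  (forall r, a <= r <= b -> (forall s, a <= s <= r -> g s <= rho) -> g r < rho) ->
  forall r, a <= r <= b -> g r < rho.
Proof.
  intros Hab Hc Ha Hap.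
  set (S := fun r => a <= r <= b /\ forall s, a <= s <= r -> g s <= rho).
  assert (Hb : bound S). { exists b. intros r [Hr _]. lra. }
  assert (Hne : exists r, S r). { exists a. split; [lra|]. intros s Hs. assert (s = a) by lra; subst; lra. }
  destruct (completeness S Hb Hne) as [m [Hub Hlub]].
  assert (Ham : a <= m). { apply Hub. split; [lra|]. intros s Hs. assert (s = a) by lra; subst; lra. }
  assert (Hmb : m <= b). { apply Hlub. intros r [Hr _]. lra. }
  assert (Hbelow : forall s, a <= s < m -> g s <= rho).
  { intros s Hs. apply NNPP; intro Hn.
    assert (m <= s). { apply Hlub. intros r [Hr Hr2]. destruct (Rle_dec r s) as [|Hrs]; auto.
      exfalso. apply Hn. apply Hr2. lra. }
    lra. }
  assert (Hm : g m <= rho).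
  { destruct (Req_dec m a) as [->|Hma]; [lra|].
    apply Rnot_lt_le; intro Hgt.
    destruct (cont_pt_eps g m (Hc m ltac:(lra)) (g m - rho) ltac:(lra)) as [d [Hd Hd2]].
    set (s := Rmax a (m - d/2)).
    assert (a <= s < m). { unfold s; split; [apply Rmax_l|]. apply Rmax_lub_lt; lra. }
    assert (Rabs (s - m) < d). { unfold s. unfold Rmax; destruct (Rle_dec a (m - d/2));
      rewrite Rabs_left; lra. }
    pose proof (Hd2 s H0). pose proof (Hbelow s H).
    revert H1; unfold Rabs; destruct (Rcase_abs (g s - g m)); lra. }
  assert (HSm : forall s, a <= s <= m -> g s <= rho).
  { intros s Hs. destruct (Req_dec s m) as [->|]; auto. apply Hbelow; lra. }
  assert (Hmlt : g m < rho) by (apply Hap; [lra|auto]).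
  assert (Hmeq : m = b).
  { destruct (Req_dec m b) as [|Hmb']; auto. exfalso.
    destruct (cont_pt_eps g m (Hc m ltac:(lra)) (rho - g m) ltac:(lra)) as [d [Hd Hd2]].
    set (r' := Rmin b (m + d/2)).
    assert (m < r' <= b). { unfold r'; split; [apply Rmin_glb_lt; lra| apply Rmin_l]. }
    assert (S r'). { split; [lra|]. intros s Hs. destruct (Rlt_dec s m); [apply Hbelow; lra|].
      assert (Rabs (s - m) < d). { assert (r' <= m + d/2) by (unfold r'; apply Rmin_r).
        rewrite Rabs_right; lra. }
      pose proof (Hd2 s H0). revert H1; unfold Rabs; destruct (Rcase_abs (g s - g m)); lra. }
    pose proof (Hub r' H0). lra. }
  subst m. intros r Hr. apply Hap; auto. intros s Hs; apply HSm; lra.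
Qed.

Lemma Rint_eq g a b (pr : Riemann_integrable g a b) : Rint g a b = RiemannInt pr.
Proof.
  unfold Rint.
  assert (Hex : exists I, exists pr : Riemann_integrable g a b, RiemannInt pr = I) by (exists (RiemannInt pr); exists pr; reflexivity).
  destruct (epsilon_spec (inhabits 0) _ Hex) as [pr' Hpr']. rewrite <- Hpr'.
  apply RiemannInt_P5.
Qed.

Definition integ (g : R -> R) (Hg : continuity g) (a b : R) : Riemann_integrable g a b.
Proof.
  destruct (Rle_dec a b) as [H|H].
  - apply continuity_implies_RiemannInt; auto.
  - apply RiemannInt_P1. apply continuity_implies_RiemannInt; [lra| auto].
Defined.

Lemma Rint_aa g a : Rint g a a = 0.
Proof. rewrite (Rint_eq g a a (RiemannInt_P7 g a)). apply RiemannInt_P9. Qed.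

Lemma Rint_deriv g (Hg : continuity g) a U :
  derivable_pt_lim (fun u => Rint g a u) U (g U).
Proof.
  set (A := Rmin a U - 1). set (B := Rmax a U + 1).
  assert (hAB : A <= B).
  { unfold A, B. pose proof (Rmin_l a U). pose proof (Rmax_l a U). lra. }
  assert (C0 : forall x, A <= x <= B -> continuity_pt g x) by (intros; apply Hg).
  assert (HU : A < U < B).
  { unfold A, B. pose proof (Rmin_r a U). pose proof (Rmax_r a U). lra. }
  assert (Ha : A <= a <= B).
  { unfold A, B. pose proof (Rmin_l a U). pose proof (Rmax_l a U). lra. }
  pose proof (RiemannInt_P27 (f:=g) (x:=U) hAB C0 HU) as HP.
  set (prim := primitive hAB (FTC_P1 hAB C0)) in HP.
  apply derivable_pt_lim_locally_ext with (f := fun u => prim u - prim a) (a := A) (b := B); auto.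
  - intros z Hz. unfold prim, primitive.
    destruct (Rle_dec A z); [|lra]. destruct (Rle_dec z B); [|lra].
    destruct (Rle_dec A a); [|lra]. destruct (Rle_dec a B); [|lra].
    rewrite (Rint_eq g a z (integ g Hg a z)).
    rewrite <- (RiemannInt_P26 (FTC_P1 hAB C0 r1 r2) (integ g Hg a z) (FTC_P1 hAB C0 r r0)). ring.
  - replace (g U) with (g U - 0) by ring. apply dpl_minus; auto. apply dpl_const.
Qed.

Lemma list_min {A : Type} (l : list A) (h : A -> R) : (forall a, 0 < h a) ->
  exists m, 0 < m /\ forall a, In a l -> m <= h a.
Proof.
  intros Hp. induction l as [|x l IH].
  - exists 1. split; [lra| intros a []].
  - destruct IH as [m [Hm Hm2]]. exists (Rmin m (h x)). split.
    + apply Rmin_pos; auto.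
    + intros a [<-|Ha]. apply Rmin_r. eapply Rle_trans; [apply Rmin_l| auto].
Qed.

Lemma list_max {A : Type} (l : list A) (h : A -> R) :
  exists M, forall a, In a l -> h a <= M.
Proof.
  induction l as [|x l IH].
  - exists 0. intros a [].
  - destruct IH as [M HM]. exists (Rmax M (h x)).
    intros a [<-|Ha]. apply Rmax_r. eapply Rle_trans; [apply HM; auto| apply Rmax_l].
Qed.

Lemma dist2_lt p q d : dist2 p q < d <-> Rabs (fst p - fst q) < d /\ Rabs (snd p - snd q) < d.
Proof.
  unfold dist2. split.
  - intros H. split; eapply Rle_lt_trans; eauto; [apply Rmax_l| apply Rmax_r].
  - intros [H1 H2]. apply Rmax_lub_lt; auto.
Qed.

Lemma dist2_tri p q r : dist2 p r <= dist2 p q + dist2 q r.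
Proof.
  unfold dist2. apply Rmax_lub.
  - replace (fst p - fst r) with ((fst p - fst q) + (fst q - fst r)) by ring.
    eapply Rle_trans; [apply Rabs_triang|]. apply Rplus_le_compat; apply Rmax_l.
  - replace (snd p - snd r) with ((snd p - snd q) + (snd q - snd r)) by ring.
    eapply Rle_trans; [apply Rabs_triang|]. apply Rplus_le_compat; apply Rmax_r.
Qed.

Lemma dist2_sym p q : dist2 p q = dist2 q p.
Proof. unfold dist2. rewrite (Rabs_minus_sym (fst p)), (Rabs_minus_sym (snd p)). reflexivity. Qed.

Lemma dist2_refl p : dist2 p p = 0.
Proof. unfold dist2. rewrite !Rminus_diag, Rabs_R0. unfold Rmax; destruct Rle_dec; lra. Qed.

Lemma dist4_ge p q : Rabs (pU p - pU q) <= dist4 p q /\ Rabs (pX1 p - pX1 q) <= dist4 p q /\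
  Rabs (pX2 p - pX2 q) <= dist4 p q /\ Rabs (pV p - pV q) <= dist4 p q.
Proof.
  unfold dist4. repeat split.
  - eapply Rle_trans; [apply Rmax_l| apply Rmax_l].
  - eapply Rle_trans; [apply Rmax_r| apply Rmax_l].
  - eapply Rle_trans; [apply Rmax_l| apply Rmax_r].
  - eapply Rle_trans; [apply Rmax_r| apply Rmax_r].
Qed.

Lemma compact_U_away K : compact_in dist4 K -> (forall p, K p -> pU p <> 0) ->
  exists c, 0 < c /\ forall p, K p -> c <= Rabs (pU p).
Proof.
  intros HK HD.
  destruct (HK R (fun c p => 0 < c /\ c < Rabs (pU p))) as [l Hl].
  - intros c p [Hc Hcp]. exists (Rabs (pU p) - c). split; [lra|].
    intros q Hq. split; auto. destruct (dist4_ge p q) as [H1 _].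
    pose proof (Rabs_triang_inv (pU p) (pU q)). 
    assert (Rabs (pU p) - Rabs (pU q) <= Rabs (pU p - pU q)) by
      (pose proof (Rabs_triang (pU p - pU q) (pU q)); replace (pU p - pU q + pU q) with (pU p) in H0 by ring; lra).
    lra.
  - intros p Hp. exists (Rabs (pU p) / 2). pose proof (Rabs_pos_lt _ (HD p Hp)). split; lra.
  - destruct (list_min l (fun c => if Rlt_dec 0 c then c else 1)) as [m [Hm Hm2]].
    { intros a. destruct (Rlt_dec 0 a); lra. }
    exists m. split; auto. intros p Hp. destruct (Hl p Hp) as [i [Hi [Hi0 Hi1]]].
    pose proof (Hm2 i Hi). destruct (Rlt_dec 0 i); lra.
Qed.

Lemma compact_proj K : compact_in dist4 K ->
  compact_in dist2 (fun q => exists U V, K (U, fst q, snd q, V)).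
Proof.
  intros HK I O HO Hcov.
  destruct (HK I (fun i p => O i (pX1 p, pX2 p))) as [l Hl].
  - intros i p Hp. destruct (HO i _ Hp) as [r [Hr Hr2]]. exists r. split; auto.
    intros q Hq. apply Hr2. destruct (dist4_ge p q) as [_ [H1 [H2 _]]].
    apply dist2_lt; simpl; split; lra.
  - intros p Hp. destruct p as [[[U X1] X2] V]. apply Hcov. exists U, V. exact Hp.
  - exists l. intros q [U [V Hq]]. destruct (Hl _ Hq) as [i [Hi Hi2]]. exists i. split; auto.
    simpl in Hi2. destruct q; exact Hi2.
Qed.

Lemma compact_unif g Kx : cont2 g -> compact_in dist2 Kx -> forall eta, 0 < eta ->
  exists d, 0 < d /\ exists M, forall X, Kx X -> forall y, dist2 y X < d ->
    Rabs (g (fst y) (snd y) - g (fst X) (snd X)) < eta /\ Rabs (g (fst y) (snd y)) <= M.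
Proof.
  intros Hg HK eta He.
  set (O := fun (i : (R*R)*R) q => let (p, d) := i in 0 < d /\
     (forall a' b', Rabs (a' - fst p) < d -> Rabs (b' - snd p) < d ->
        Rabs (g a' b' - g (fst p) (snd p)) < eta/2) /\ dist2 p q < d/2).
  destruct (HK _ O) as [l Hl].
  - intros [p d] q [Hd [Hp Hq]]. exists (d/2 - dist2 p q). split; [lra|].
    intros q' Hq'. split; auto. split; auto. pose proof (dist2_tri p q q'). lra.
  - intros X HX. destruct (Hg (fst X) (snd X) (eta/2) ltac:(lra)) as [d [Hd Hd2]].
    exists (X, d). simpl. split; auto. split; auto. rewrite dist2_refl; lra.
  - destruct (list_min l (fun i => if Rlt_dec 0 (snd i) then snd i else 1)) as [m [Hm Hm2]].
    { intros a. destruct (Rlt_dec 0 (snd a)); lra. }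
    destruct (list_max l (fun i => Rabs (g (fst (fst i)) (snd (fst i))))) as [M HM].
    exists (m/2). split; [lra|]. exists (M + eta).
    intros X HX y Hy. destruct (Hl X HX) as [[p d] [Hi [Hd [Hp HpX]]]].
    pose proof (Hm2 _ Hi) as Hmd. simpl in Hmd. destruct (Rlt_dec 0 d); [|lra].
    pose proof (HM _ Hi) as HMp. simpl in HMp.
    assert (Hpy : dist2 p y < d). { pose proof (dist2_tri p X y). rewrite (dist2_sym X y) in H. lra. }
    apply dist2_lt in Hpy. apply dist2_lt in HpX.
    destruct Hpy as [Hy1 Hy2]. destruct HpX as [Hx1 Hx2].
    rewrite Rabs_minus_sym in Hy1, Hy2, Hx1, Hx2.
    pose proof (Hp (fst y) (snd y) Hy1 Hy2).
    pose proof (Hp (fst X) (snd X) ltac:(lra) ltac:(lra)).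
    split.
    + replace (g (fst y) (snd y) - g (fst X) (snd X)) with
        ((g (fst y) (snd y) - g (fst p) (snd p)) - (g (fst X) (snd X) - g (fst p) (snd p))) by ring.
      eapply Rle_lt_trans; [apply Rabs_triang|]. rewrite Rabs_Ropp. lra.
    + replace (g (fst y) (snd y)) with ((g (fst y) (snd y) - g (fst p) (snd p)) + g (fst p) (snd p)) by ring.
      eapply Rle_trans; [apply Rabs_triang|]. lra.
Qed.

Lemma cont_plus g h : continuity g -> continuity h -> continuity (fun x => g x + h x).
Proof. intros; exact (continuity_plus _ _ H H0). Qed.
Lemma cont_mult g h : continuity g -> continuity h -> continuity (fun x => g x * h x).
Proof. intros; exact (continuity_mult _ _ H H0). Qed.
Lemma cont_minus g h : continuity g -> continuity h -> continuity (fun x => g x - h x).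
Proof. intros; exact (continuity_minus _ _ H H0). Qed.
Lemma cont_const c : continuity (fun _ => c).
Proof. intros x. apply eps_cont_pt. intros eps He. exists 1. split; [lra|]. intros.
  rewrite Rminus_diag, Rabs_R0; auto. Qed.
Lemma cont_abs g : continuity g -> continuity (fun x => Rabs (g x)).
Proof. intros H x. exact (continuity_pt_comp g Rabs x (H x) (Rcontinuity_abs (g x))). Qed.
Lemma cont_dpl g g' : (forall u, derivable_pt_lim g u (g' u)) -> continuity g.
Proof. intros H x. apply derivable_continuous_pt. exists (g' x). apply H. Qed.
Lemma cont_comp2 F y1 y2 : cont2 F -> continuity y1 -> continuity y2 ->
  continuity (fun r => F (y1 r) (y2 r)).
Proof.
  intros HF H1 H2 x. apply eps_cont_pt. intros eps He.
  destruct (HF (y1 x) (y2 x) eps He) as [d [Hd Hd2]].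
  destruct (cont_pt_eps y1 x (H1 x) d Hd) as [d1 [Hd1 Hd12]].
  destruct (cont_pt_eps y2 x (H2 x) d Hd) as [d2 [Hd2' Hd22]].
  exists (Rmin d1 d2). split; [apply Rmin_pos; auto|]. intros y Hy.
  apply Hd2; [apply Hd12| apply Hd22]; eapply Rlt_le_trans; eauto; [apply Rmin_l|apply Rmin_r].
Qed.

Lemma CONST_all P a b : (forall u, derivable_pt_lim P u 0) -> P b = P a.
Proof.
  intros H. destruct (Rle_dec a b).
  - apply (CONST P (fun _ => 0) a b); auto.
  - symmetry. apply (CONST P (fun _ => 0) b a); auto; lra.
Qed.

Section ODE.
Variables (f : R -> R -> R) (delta : R -> R -> R) (x1 x2 : R -> R -> R -> R -> R) (e X1 X2 : R).
Hypothesis He : 0 < e <= 1.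
Hypothesis Hdc : continuity (delta e).
Hypothesis Hdz : forall u, (u < - e \/ e < u) -> delta e u = 0.
Hypothesis Hy1 : forall u, derivable_pt_lim (x1 e X1 X2) u (Deriv (x1 e X1 X2) u).
Hypothesis Hy2 : forall u, derivable_pt_lim (x2 e X1 X2) u (Deriv (x2 e X1 X2) u).
Hypothesis Hode : solves_ode f delta x1 x2 e X1 X2.
Hypothesis Hf : cont2 f.
Hypothesis Hf1 : cont2 (P1_2 f).
Hypothesis Hf2 : cont2 (P2_2 f).

Let y1 := x1 e X1 X2.
Let y2 := x2 e X1 X2.
Let z1 := Deriv y1.
Let z2 := Deriv y2.
Let a1 := fun r => / 2 * P1_2 f (y1 r) (y2 r).
Let a2 := fun r => / 2 * P2_2 f (y1 r) (y2 r).

Lemma z1_d u : derivable_pt_lim z1 u (a1 u * delta e u).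
Proof. destruct Hode as [H _]. apply H. Qed.
Lemma z2_d u : derivable_pt_lim z2 u (a2 u * delta e u).
Proof. destruct Hode as [_ [H _]]. apply H. Qed.

Lemma y1_c : continuity y1. Proof. exact (cont_dpl _ _ Hy1). Qed.
Lemma y2_c : continuity y2. Proof. exact (cont_dpl _ _ Hy2). Qed.
Lemma z1_c : continuity z1. Proof. exact (cont_dpl _ _ z1_d). Qed.
Lemma z2_c : continuity z2. Proof. exact (cont_dpl _ _ z2_d). Qed.

Lemma z_zero_left u : u <= - e -> z1 u = 0 /\ z2 u = 0.
Proof.
  intros Hu. destruct Hode as [_ [_ [_ [_ [Hz1 Hz2]]]]].
  fold y1 y2 in Hz1, Hz2. fold z1 z2 in Hz1, Hz2.
  destruct (Rle_dec u (-1)).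
  - split.
    + rewrite <- Hz1. symmetry. apply (CONST z1 (fun r => a1 r * delta e r) u (-1)); auto.
      intros; apply z1_d. intros v Hv. rewrite Hdz; [ring| lra].
    + rewrite <- Hz2. symmetry. apply (CONST z2 (fun r => a2 r * delta e r) u (-1)); auto.
      intros; apply z2_d. intros v Hv. rewrite Hdz; [ring| lra].
  - split.
    + rewrite <- Hz1. apply (CONST z1 (fun r => a1 r * delta e r) (-1) u); [lra| |].
      intros; apply z1_d. intros v Hv. rewrite Hdz; [ring| lra].
    + rewrite <- Hz2. apply (CONST z2 (fun r => a2 r * delta e r) (-1) u); [lra| |].
      intros; apply z2_d. intros v Hv. rewrite Hdz; [ring| lra].
Qed.

Lemma y_at_me : y1 (- e) = X1 /\ y2 (- e) = X2.
Proof.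
  destruct Hode as [_ [_ [Hx1 [Hx2 _]]]]. fold y1 y2 in Hx1, Hx2. split.
  - rewrite <- Hx1. apply (CONST y1 z1 (-1) (-e)); [lra| intros; apply Hy1|].
    intros v Hv. apply z_zero_left. lra.
  - rewrite <- Hx2. apply (CONST y2 z2 (-1) (-e)); [lra| intros; apply Hy2|].
    intros v Hv. apply z_zero_left. lra.
Qed.

Lemma z_right u : e <= u -> z1 u = z1 e /\ z2 u = z2 e.
Proof.
  intros Hu. split.
  - apply (CONST z1 (fun r => a1 r * delta e r) e u); auto.
    intros; apply z1_d. intros v Hv. rewrite Hdz; [ring| lra].
  - apply (CONST z2 (fun r => a2 r * delta e r) e u); auto.
    intros; apply z2_d. intros v Hv. rewrite Hdz; [ring| lra].
Qed.

Let D := fun u => Rint (delta e) (- e) u.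
Let Dabs := fun u => Rint (fun s => Rabs (delta e s)) (- e) u.

Lemma D_d u : derivable_pt_lim D u (delta e u).
Proof. apply (Rint_deriv (delta e) Hdc). Qed.
Lemma Dabs_d u : derivable_pt_lim Dabs u (Rabs (delta e u)).
Proof. apply (Rint_deriv (fun s => Rabs (delta e s)) (cont_abs _ Hdc)). Qed.

Lemma Dabs_mono u v : u <= v -> Dabs u <= Dabs v.
Proof.
  intros H. pose proof (CMP (fun _ => 0) Dabs (fun _ => 0) (fun s => Rabs (delta e s)) u v H
    (fun s _ => dpl_const 0 s) (fun s _ => Dabs_d s)) as Hc.
  assert (Rabs (0 - 0) <= Dabs v - Dabs u).
  { apply Hc. intros; rewrite Rabs_R0; apply Rabs_pos. }
  rewrite Rminus_diag, Rabs_R0 in H0. lra.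
Qed.

Lemma Dabs_me : Dabs (- e) = 0.
Proof. apply Rint_aa. Qed.
Lemma D_me : D (- e) = 0.
Proof. apply Rint_aa. Qed.

Lemma z_bound r M : -e <= r <= e ->
  (forall s, -e <= s <= r -> Rabs (P1_2 f (y1 s) (y2 s)) <= M /\ Rabs (P2_2 f (y1 s) (y2 s)) <= M) ->
  forall u, -e <= u <= r -> Rabs (z1 u) <= M / 2 * Dabs e /\ Rabs (z2 u) <= M / 2 * Dabs e.
Proof.
  intros Hr HM u Hu.
  assert (HM0 : 0 <= M). { destruct (HM (-e)) as [H _]; [lra|]. pose proof (Rabs_pos (P1_2 f (y1 (-e)) (y2 (-e)))). lra. }
  assert (Hmono : M / 2 * Dabs u <= M / 2 * Dabs e).
  { apply Rmult_le_compat_l; [lra|]. apply Dabs_mono; lra. }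
  destruct (z_zero_left (-e) ltac:(lra)) as [Z1 Z2].
  split.
  - pose proof (CMP z1 (fun s => M / 2 * Dabs s) (fun r => a1 r * delta e r) (fun s => M / 2 * Rabs (delta e s)) (-e) u
      ltac:(lra) (fun s _ => z1_d s) (fun s _ => dpl_scal _ _ _ _ (Dabs_d s))) as Hc. cbv beta in Hc.
    rewrite Z1, Dabs_me in Hc. rewrite Rminus_0_r in Hc.
    assert (Rabs (z1 u) <= M / 2 * Dabs u - M / 2 * 0).
    { apply Hc. intros s Hs. unfold a1. rewrite !Rabs_mult. rewrite Rabs_inv, (Rabs_right 2) by lra.
      destruct (HM s ltac:(lra)) as [H1 _]. pose proof (Rabs_pos (delta e s)).
      pose proof (Rabs_pos (P1_2 f (y1 s) (y2 s))). 
      apply Rmult_le_compat_r; auto. lra. }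
    lra.
  - pose proof (CMP z2 (fun s => M / 2 * Dabs s) (fun r => a2 r * delta e r) (fun s => M / 2 * Rabs (delta e s)) (-e) u
      ltac:(lra) (fun s _ => z2_d s) (fun s _ => dpl_scal _ _ _ _ (Dabs_d s))) as Hc. cbv beta in Hc.
    rewrite Z2, Dabs_me in Hc. rewrite Rminus_0_r in Hc.
    assert (Rabs (z2 u) <= M / 2 * Dabs u - M / 2 * 0).
    { apply Hc. intros s Hs. unfold a2. rewrite !Rabs_mult. rewrite Rabs_inv, (Rabs_right 2) by lra.
      destruct (HM s ltac:(lra)) as [_ H1]. pose proof (Rabs_pos (delta e s)).
      pose proof (Rabs_pos (P2_2 f (y1 s) (y2 s))). 
      apply Rmult_le_compat_r; auto. lra. }
    lra.
Qed.

Lemma y_bound r B : -e <= r <= e -> (forall u, -e <= u <= r -> Rabs (z1 u) <= B /\ Rabs (z2 u) <= B) ->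
  Rabs (y1 r - X1) <= B * (r + e) /\ Rabs (y2 r - X2) <= B * (r + e).
Proof.
  intros Hr HB. destruct y_at_me as [E1 E2].
  assert (HQ : forall s, derivable_pt_lim (fun x => B * x) s B).
  { intros s. apply dpl_eq with (B * 1); [apply dpl_scal, dpl_id| ring]. }
  split.
  - pose proof (CMP y1 (fun x => B * x) z1 (fun _ => B) (-e) r ltac:(lra) (fun s _ => Hy1 s) (fun s _ => HQ s)) as Hc.
    rewrite E1 in Hc. replace (B * (r + e)) with (B * r - B * - e) by ring. apply Hc.
    intros u Hu. apply HB. lra.
  - pose proof (CMP y2 (fun x => B * x) z2 (fun _ => B) (-e) r ltac:(lra) (fun s _ => Hy2 s) (fun s _ => HQ s)) as Hc.
    rewrite E2 in Hc. replace (B * (r + e)) with (B * r - B * - e) by ring. apply Hc.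
    intros u Hu. apply HB. lra.
Qed.

Lemma boot M rho Cb : 0 < rho -> Dabs e <= Cb -> 2 * e * M * Cb < rho ->
  (forall a b, dist2 (a,b) (X1,X2) <= rho -> Rabs (P1_2 f a b) <= M /\ Rabs (P2_2 f a b) <= M) ->
  forall r, -e <= r <= e -> Rabs (y1 r - X1) <= e * M * Cb /\ Rabs (y2 r - X2) <= e * M * Cb.
Proof.
  intros Hrho HC Hsmall HM.
  assert (HM0 : 0 <= M).
  { destruct (HM X1 X2) as [H _]. rewrite dist2_refl; lra. pose proof (Rabs_pos (P1_2 f X1 X2)); lra. }
  assert (HC0 : 0 <= Cb). { pose proof (Dabs_mono (-e) e ltac:(lra)). rewrite Dabs_me in H. lra. }
  set (G := fun r => Rabs (y1 r - X1) + Rabs (y2 r - X2)).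
  assert (Hinner : forall r, -e <= r <= e -> (forall s, -e <= s <= r -> G s <= rho) ->
     Rabs (y1 r - X1) <= e * M * Cb /\ Rabs (y2 r - X2) <= e * M * Cb).
  { intros r Hr HG.
    assert (Hz : forall u, -e <= u <= r -> Rabs (z1 u) <= M * Cb / 2 /\ Rabs (z2 u) <= M * Cb / 2).
    { intros u Hu. destruct (z_bound r M Hr) with (u := u) as [B1 B2]; auto.
      - intros s Hs. apply HM. pose proof (HG s Hs). unfold G in H. unfold dist2; simpl.
        pose proof (Rabs_pos (y1 s - X1)). pose proof (Rabs_pos (y2 s - X2)).
        apply Rmax_lub; lra.
      - assert (M / 2 * Dabs e <= M * Cb / 2). { replace (M * Cb / 2) with (M / 2 * Cb) by field.
          apply Rmult_le_compat_l; lra. }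
        lra. }
    destruct (y_bound r (M * Cb / 2) Hr Hz) as [B1 B2].
    assert (M * Cb / 2 * (r + e) <= e * M * Cb).
    { assert (0 <= M * Cb) by (apply Rmult_le_pos; auto). nra. }
    lra. }
  assert (HGlt : forall r, -e <= r <= e -> G r < rho).
  { apply CI; [lra| | |].
    - intros r _. unfold G. apply cont_plus; apply cont_abs; apply cont_minus;
        try apply cont_const; [apply y1_c| apply y2_c].
    - unfold G. destruct y_at_me as [E1 E2]. rewrite E1, E2, !Rminus_diag, Rabs_R0. lra.
    - intros r Hr HG. destruct (Hinner r Hr HG). unfold G. lra. }
  intros r Hr. apply Hinner; auto. intros s Hs. left. apply HGlt. lra.
Qed.

Lemma key1 eta' : (forall s, -e <= s <= e -> Rabs (P1_2 f (y1 s) (y2 s) - P1_2 f X1 X2) <= eta') ->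
  Rabs (z1 e - / 2 * P1_2 f X1 X2 * D e) <= eta' / 2 * Dabs e.
Proof.
  intros H. set (A := / 2 * P1_2 f X1 X2).
  pose proof (CMP (fun u => z1 u - A * D u) (fun u => eta' / 2 * Dabs u)
    (fun u => a1 u * delta e u - A * delta e u) (fun u => eta' / 2 * Rabs (delta e u)) (-e) e ltac:(lra)
    (fun s _ => dpl_minus _ _ _ _ _ (z1_d s) (dpl_scal _ _ _ _ (D_d s)))
    (fun s _ => dpl_scal _ _ _ _ (Dabs_d s))) as Hc. cbv beta in Hc.
  destruct (z_zero_left (-e) ltac:(lra)) as [Z1 _]. rewrite Z1, D_me, Dabs_me in Hc.
  replace (z1 e - A * D e - (0 - A * 0)) with (z1 e - A * D e) in Hc by ring.
  replace (eta' / 2 * Dabs e) with (eta' / 2 * Dabs e - eta' / 2 * 0) by ring.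
  apply Hc. intros u Hu.
  replace (a1 u * delta e u - A * delta e u) with (/ 2 * (P1_2 f (y1 u) (y2 u) - P1_2 f X1 X2) * delta e u)
    by (unfold a1, A; ring).
  rewrite !Rabs_mult, Rabs_inv, (Rabs_right 2) by lra.
  pose proof (H u ltac:(lra)). pose proof (Rabs_pos (delta e u)).
  replace (eta' / 2 * Rabs (delta e u)) with (/ 2 * eta' * Rabs (delta e u)) by field.
  apply Rmult_le_compat_r; auto. lra.
Qed.

Lemma key2 eta' : (forall s, -e <= s <= e -> Rabs (P2_2 f (y1 s) (y2 s) - P2_2 f X1 X2) <= eta') ->
  Rabs (z2 e - / 2 * P2_2 f X1 X2 * D e) <= eta' / 2 * Dabs e.
Proof.
  intros H. set (A := / 2 * P2_2 f X1 X2).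
  pose proof (CMP (fun u => z2 u - A * D u) (fun u => eta' / 2 * Dabs u)
    (fun u => a2 u * delta e u - A * delta e u) (fun u => eta' / 2 * Rabs (delta e u)) (-e) e ltac:(lra)
    (fun s _ => dpl_minus _ _ _ _ _ (z2_d s) (dpl_scal _ _ _ _ (D_d s)))
    (fun s _ => dpl_scal _ _ _ _ (Dabs_d s))) as Hc. cbv beta in Hc.
  destruct (z_zero_left (-e) ltac:(lra)) as [_ Z2]. rewrite Z2, D_me, Dabs_me in Hc.
  replace (z2 e - A * D e - (0 - A * 0)) with (z2 e - A * D e) in Hc by ring.
  replace (eta' / 2 * Dabs e) with (eta' / 2 * Dabs e - eta' / 2 * 0) by ring.
  apply Hc. intros u Hu.
  replace (a2 u * delta e u - A * delta e u) with (/ 2 * (P2_2 f (y1 u) (y2 u) - P2_2 f X1 X2) * delta e u)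
    by (unfold a2, A; ring).
  rewrite !Rabs_mult, Rabs_inv, (Rabs_right 2) by lra.
  pose proof (H u ltac:(lra)). pose proof (Rabs_pos (delta e u)).
  replace (eta' / 2 * Rabs (delta e u)) with (/ 2 * eta' * Rabs (delta e u)) by field.
  apply Rmult_le_compat_r; auto. lra.
Qed.

Let gw := fun r => (P1_2 f (y1 r) (y2 r) * z1 r + P2_2 f (y1 r) (y2 r) * z2 r) * delta e r.

Lemma gw_c : continuity gw.
Proof.
  unfold gw. apply cont_mult; auto. apply cont_plus; apply cont_mult;
  try (apply cont_comp2; auto; [apply y1_c| apply y2_c]); [apply z1_c| apply z2_c].
Qed.

Lemma H_id u : Rint gw (- e) u = z1 u * z1 u + z2 u * z2 u.
Proof.
  set (Phi := fun s => Rint gw (- e) s - (z1 s * z1 s + z2 s * z2 s)).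
  assert (Phi u = Phi (-e)).
  { apply CONST_all. intros s. unfold Phi.
    eapply dpl_eq. apply dpl_minus. apply (Rint_deriv gw gw_c).
    apply dpl_plus; apply dpl_mult; (apply z1_d || apply z2_d).
    unfold gw, a1, a2. fold z1 z2. field. }
  unfold Phi in H. rewrite Rint_aa in H. destruct (z_zero_left (-e) ltac:(lra)) as [Z1 Z2].
  rewrite Z1, Z2 in H. lra.
Qed.

Lemma Rint_gw_d u : derivable_pt_lim (fun s => Rint gw (- e) s) u (Rint gw (- e) u).
Abort.
End ODE.

Lemma lim_d c h k U : U <> 0 ->
  derivable_pt_lim (fun u => c + h * Heav u + k * Uplus u) U (if Rlt_dec 0 U then k else 0).
Proof.
  intros HU. destruct (Rlt_dec 0 U) as [Hp|Hn].
  - apply derivable_pt_lim_locally_ext with (f := fun u => (c + h) + k * u) (a := 0) (b := U + 1); [lra| |].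
    + intros z Hz. unfold Heav, Uplus. destruct (Rlt_dec 0 z); [|lra].
      rewrite Rmax_left by lra. ring.
    + apply dpl_eq with (0 + k * 1); [apply dpl_plus; [apply dpl_const| apply dpl_scal, dpl_id]| ring].
  - apply derivable_pt_lim_locally_ext with (f := fun u => c) (a := U - 1) (b := 0); [lra| |].
    + intros z Hz. unfold Heav, Uplus. destruct (Rlt_dec 0 z); [lra|].
      rewrite Rmax_right by lra. ring.
    + apply dpl_const.
Qed.

Lemma Deriv_ext g h u l : (forall x, h x = g x) -> derivable_pt_lim h u l -> Deriv g u = l.
Proof. intros H1 H2. apply Deriv_unique. eapply dpl_ext; eauto. Qed.

Section Main.
Variables (f : R -> R -> R) (delta : R -> R -> R) (x1 x2 : R -> R -> R -> R -> R).
Hypothesis (Hf : smooth2 f).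
Hypothesis (Hdelta : strict_delta_net delta).
Hypothesis (Hxsmooth : forall e, 0 < e <= 1 -> smooth3 (x1 e) /\ smooth3 (x2 e)).

Lemma deriv_facts e X1 X2 V U : 0 < e <= 1 -> solves_ode f delta x1 x2 e X1 X2 -> (U < - e \/ e < U) ->
  Deriv (fun u => x1 e X1 X2 u) U = Deriv (x1 e X1 X2) U /\
  Deriv (fun u => x2 e X1 X2 u) U = Deriv (x2 e X1 X2) U /\
  Deriv (fun u => v_eps f delta x1 x2 e X1 X2 V u) U =
     Deriv (x1 e X1 X2) U * Deriv (x1 e X1 X2) U + Deriv (x2 e X1 X2) U * Deriv (x2 e X1 X2) U /\
  Deriv (fun u => w_eps f delta x1 x2 e X1 X2 V u) U =
     Deriv (x1 e X1 X2) U * Deriv (x1 e X1 X2) U + Deriv (x2 e X1 X2) U * Deriv (x2 e X1 X2) U.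
Proof.
  intros He Hode HU.
  destruct (Hxsmooth e He) as [S1 S2].
  assert (Hy1 : forall u, derivable_pt_lim (x1 e X1 X2) u (Deriv (x1 e X1 X2) u)).
  { intros u. destruct (S1 1%nat) as [_ [_ [H _]]]. exact (H X1 X2 u). }
  assert (Hy2 : forall u, derivable_pt_lim (x2 e X1 X2) u (Deriv (x2 e X1 X2) u)).
  { intros u. destruct (S2 1%nat) as [_ [_ [H _]]]. exact (H X1 X2 u). }
  destruct Hdelta as [Hd1 _]. destruct (Hd1 e He) as [Hds Hdz].
  assert (Hdc : continuity (delta e)) by exact (Hds 0%nat).
  assert (Hf0 : cont2 f) by exact (Hf 0%nat).
  destruct (Hf 1%nat) as [_ [_ [Hf1 Hf2]]].
  pose proof (H_id f delta x1 x2 e X1 X2 He Hdc Hdz Hy1 Hy2 Hode Hf1 Hf2) as HH.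
  pose proof (gw_c f delta x1 x2 e X1 X2 Hdc Hy1 Hy2 Hode Hf1 Hf2) as Hgc.
  set (gw := fun r => (P1_2 f (x1 e X1 X2 r) (x2 e X1 X2 r) * Deriv (x1 e X1 X2) r +
         P2_2 f (x1 e X1 X2 r) (x2 e X1 X2 r) * Deriv (x2 e X1 X2) r) * delta e r) in *.
  set (Hfun := fun s => Rint gw (- e) s).
  assert (Hfc : continuity Hfun) by (apply (cont_dpl _ _ (Rint_deriv gw Hgc (-e)))).
  set (gf := fun s => f (x1 e X1 X2 s) (x2 e X1 X2 s) * delta e s).
  assert (Hgfc : continuity gf).
  { apply cont_mult; auto. apply cont_comp2; auto; [apply (y1_c x1 e X1 X2 Hy1)| apply (y2_c x2 e X1 X2 Hy2)]. }
  assert (Hw : derivable_pt_lim (fun u => w_eps f delta x1 x2 e X1 X2 V u) U (Hfun U)).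
  { apply dpl_eq with (0 + Hfun U); [|ring]. apply dpl_plus; [apply dpl_const|].
    apply (Rint_deriv Hfun Hfc). }
  refine (conj eq_refl (conj eq_refl (conj _ _))).
  - apply Deriv_ext with (h := fun u => w_eps f delta x1 x2 e X1 X2 V u + Rint gf (- e) u); [reflexivity|].
    apply dpl_eq with (Hfun U + gf U). apply dpl_plus; auto. apply (Rint_deriv gf Hgfc).
    unfold gf, Hfun. rewrite HH, Hdz; auto. ring.
  - apply Deriv_ext with (h := fun u => w_eps f delta x1 x2 e X1 X2 V u); [reflexivity|].
    apply dpl_eq with (Hfun U); auto.
Qed.

Lemma sq_lemma z A eps M : Rabs (z - A) < eps -> Rabs A <= M / 2 -> eps <= 1 -> 0 <= M ->
  Rabs (z * z - A * A) <= eps * (M + 1).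
Proof.
  intros H1 H2 H3 H4. replace (z * z - A * A) with ((z - A) * ((z - A) + 2 * A)) by ring.
  rewrite Rabs_mult. pose proof (Rabs_triang (z - A) (2 * A)). rewrite Rabs_mult, (Rabs_right 2) in H by lra.
  pose proof (Rabs_pos (z - A)). pose proof (Rabs_pos (z - A + 2 * A)).
  apply Rmult_le_compat; auto; lra.
Qed.

Hypothesis Hxode : forall K : R * R -> Prop, compact_in dist2 K ->
     exists eK, 0 < eK /\
       forall e X1 X2, 0 < e <= 1 -> e <= eK -> K (X1, X2) ->
         solves_ode f delta x1 x2 e X1 X2.

Lemma core K : compact_in dist4 K -> (forall p, K p -> pU p <> 0) -> forall eta, 0 < eta ->
  exists e0, 0 < e0 /\ forall e p, 0 < e <= 1 -> e < e0 -> K p ->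
   dist4 (dU4 (t_eps f delta x1 x2 e) p) (dU4 (t_lim f) p) < eta /\
   dist4 (dU4 (s_eps f delta x1 x2 e) p) (dU4 (s_lim f) p) < eta.
Proof.
  intros HK HD eta Heta.
  destruct (compact_U_away K HK HD) as [c [Hc HcK]].
  set (Kx := fun q : R*R => exists U V, K (U, fst q, snd q, V)).
  assert (HKx : compact_in dist2 Kx) by (apply compact_proj; auto).
  destruct (Hxode Kx HKx) as [eK [HeK HeK2]].
  assert (Hf0 : cont2 f) by exact (Hf 0%nat).
  destruct (Hf 1%nat) as [_ [_ [Hf1 Hf2]]].
  destruct (compact_unif _ Kx Hf1 HKx 1 ltac:(lra)) as [d1 [Hd1 [M1 HM1]]].
  destruct (compact_unif _ Kx Hf2 HKx 1 ltac:(lra)) as [d2 [Hd2 [M2 HM2]]].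
  set (rho := Rmin d1 d2 / 2).
  assert (Hrho : 0 < rho) by (unfold rho; pose proof (Rmin_pos _ _ Hd1 Hd2); lra).
  assert (Hrho1 : rho < d1) by (unfold rho; pose proof (Rmin_l d1 d2); pose proof (Rmin_pos _ _ Hd1 Hd2); lra).
  assert (Hrho2 : rho < d2) by (unfold rho; pose proof (Rmin_r d1 d2); pose proof (Rmin_pos _ _ Hd1 Hd2); lra).
  set (M := Rmax 1 (Rmax M1 M2)).
  assert (HM1' : M1 <= M) by (unfold M; eapply Rle_trans; [apply Rmax_l| apply Rmax_r]).
  assert (HM2' : M2 <= M) by (unfold M; eapply Rle_trans; [apply Rmax_r| apply Rmax_r]).
  assert (HM : 1 <= M) by (unfold M; apply Rmax_l).
  pose proof Hdelta as Hdelta'.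
  destruct Hdelta' as [Hdl1 [Hdl2 [C [HC [e1 [He1 HCb]]]]]].
  set (eps := Rmin 1 (eta / (8 * (M + 1))) / 2).
  assert (Heps0 : 0 < eps).
  { unfold eps. assert (0 < eta / (8 * (M + 1))) by (apply Rdiv_lt_0_compat; lra).
    pose proof (Rmin_pos 1 _ Rlt_0_1 H). lra. }
  assert (Heps1 : eps <= 1/2) by (unfold eps; pose proof (Rmin_l 1 (eta / (8 * (M + 1)))); lra).
  assert (Heps2 : eps * (M + 1) <= eta / 16).
  { unfold eps. pose proof (Rmin_r 1 (eta / (8 * (M + 1)))).
    assert (Rmin 1 (eta / (8 * (M + 1))) * (M + 1) <= eta / (8 * (M + 1)) * (M + 1))
      by (apply Rmult_le_compat_r; lra).
    replace (eta / (8 * (M + 1)) * (M + 1)) with (eta / 8) in H0 by (field; lra). lra. }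
  set (eta1 := eps / (M + 1)).
  assert (Heta1 : 0 < eta1) by (unfold eta1; apply Rdiv_lt_0_compat; lra).
  destruct (Hdl2 eta1 Heta1) as [e0 [He0 HD1]].
  set (eta' := eps / C).
  assert (Heta' : 0 < eta') by (unfold eta'; apply Rdiv_lt_0_compat; lra).
  destruct (compact_unif _ Kx Hf1 HKx eta' Heta') as [d3 [Hd3 [M3 HU3]]].
  destruct (compact_unif _ Kx Hf2 HKx eta' Heta') as [d4 [Hd4 [M4 HU4]]].
  set (dd := Rmin d3 d4).
  assert (Hdd : 0 < dd) by (apply Rmin_pos; auto).
  assert (HMC : 0 < M * C) by (apply Rmult_lt_0_compat; lra).
  set (E0 := Rmin (Rmin (Rmin eK c) (Rmin e1 e0)) (Rmin (rho / (4 * (M * C))) (dd / (2 * (M * C))))).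
  exists E0. split.
  { unfold E0. repeat apply Rmin_pos; auto; apply Rdiv_lt_0_compat; lra. }
  intros e [[[U X1] X2] V] He Hee HKp.
  assert (HE0 : e < eK /\ e < c /\ e < e1 /\ e < e0 /\ e < rho / (4 * (M * C)) /\ e < dd / (2 * (M * C))).
  { unfold E0 in Hee.
    pose proof (Rmin_l (Rmin (Rmin eK c) (Rmin e1 e0)) (Rmin (rho / (4 * (M * C))) (dd / (2 * (M * C))))).
    pose proof (Rmin_r (Rmin (Rmin eK c) (Rmin e1 e0)) (Rmin (rho / (4 * (M * C))) (dd / (2 * (M * C))))).
    pose proof (Rmin_l (Rmin eK c) (Rmin e1 e0)). pose proof (Rmin_r (Rmin eK c) (Rmin e1 e0)).
    pose proof (Rmin_l eK c). pose proof (Rmin_r eK c). pose proof (Rmin_l e1 e0). pose proof (Rmin_r e1 e0).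
    pose proof (Rmin_l (rho / (4 * (M * C)))  (dd / (2 * (M * C)))).
    pose proof (Rmin_r (rho / (4 * (M * C)))  (dd / (2 * (M * C)))).
    repeat split; lra. }
  destruct HE0 as [HeK' [Hec [He1' [He0' [Herho Hedd]]]]].
  assert (HKx' : Kx (X1, X2)) by (exists U, V; exact HKp).
  pose proof (HeK2 e X1 X2 He ltac:(lra) HKx') as Hode.
  destruct (Hxsmooth e He) as [S1 S2].
  assert (Hy1 : forall u, derivable_pt_lim (x1 e X1 X2) u (Deriv (x1 e X1 X2) u)).
  { intros u. destruct (S1 1%nat) as [_ [_ [H _]]]. exact (H X1 X2 u). }
  assert (Hy2 : forall u, derivable_pt_lim (x2 e X1 X2) u (Deriv (x2 e X1 X2) u)).
  { intros u. destruct (S2 1%nat) as [_ [_ [H _]]]. exact (H X1 X2 u). }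
  destruct (Hdl1 e He) as [Hds Hdz].
  assert (Hdc : continuity (delta e)) by exact (Hds 0%nat).
  pose proof (HcK _ HKp) as HUc. simpl in HUc.
  assert (HUe : U < - e \/ e < U).
  { revert HUc. unfold Rabs; destruct (Rcase_abs U); intros; lra. }
  destruct (deriv_facts e X1 X2 V U He Hode HUe) as [E1 [E2 [E3 E4]]].
  assert (Hbd : forall a b, dist2 (a,b) (X1,X2) <= rho -> Rabs (P1_2 f a b) <= M /\ Rabs (P2_2 f a b) <= M).
  { intros a b Hab. destruct (HM1 (X1,X2) HKx' (a,b)) as [_ B1]; [lra|].
    destruct (HM2 (X1,X2) HKx' (a,b)) as [_ B2]; [lra|]. simpl in B1, B2. split; lra. }
  pose proof (HCb e He ltac:(lra)) as HDabs.
  assert (Hsmall : 2 * e * M * C < rho).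
  { assert (e * (4 * (M * C)) < rho). { apply (Rmult_lt_compat_r (4 * (M * C))) in Herho; [|lra].
      replace (rho / (4 * (M * C)) * (4 * (M * C))) with rho in Herho by (field; lra). lra. }
    nra. }
  pose proof (boot f delta x1 x2 e X1 X2 He Hdc Hdz Hy1 Hy2 Hode M rho C Hrho HDabs Hsmall Hbd) as Hboot.
  assert (HeMC : e * M * C < dd).
  { apply (Rmult_lt_compat_r (2 * (M * C))) in Hedd; [|lra].
    replace (dd / (2 * (M * C)) * (2 * (M * C))) with dd in Hedd by (field; lra). nra. }
  assert (Hdd3 : dd <= d3) by apply Rmin_l. assert (Hdd4 : dd <= d4) by apply Rmin_r.
  assert (Hk1 : forall s, -e <= s <= e -> Rabs (P1_2 f (x1 e X1 X2 s) (x2 e X1 X2 s) - P1_2 f X1 X2) <= eta').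
  { intros s Hs. destruct (Hboot s Hs) as [B1 B2].
    assert (Hdi : dist2 (x1 e X1 X2 s, x2 e X1 X2 s) (X1, X2) < d3) by (apply dist2_lt; simpl; split; lra).
    destruct (HU3 (X1,X2) HKx' (x1 e X1 X2 s, x2 e X1 X2 s) Hdi) as [H _].
    left; exact H. }
  assert (Hk2 : forall s, -e <= s <= e -> Rabs (P2_2 f (x1 e X1 X2 s) (x2 e X1 X2 s) - P2_2 f X1 X2) <= eta').
  { intros s Hs. destruct (Hboot s Hs) as [B1 B2].
    assert (Hdi : dist2 (x1 e X1 X2 s, x2 e X1 X2 s) (X1, X2) < d4) by (apply dist2_lt; simpl; split; lra).
    destruct (HU4 (X1,X2) HKx' (x1 e X1 X2 s, x2 e X1 X2 s) Hdi) as [H _].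
    left; exact H. }
  pose proof (key1 f delta x1 x2 e X1 X2 He Hdc Hdz Hode eta' Hk1) as K1.
  pose proof (key2 f delta x1 x2 e X1 X2 He Hdc Hdz Hode eta' Hk2) as K2.
  cbv beta in K1, K2.
  pose proof (HD1 e He ltac:(lra)) as HDe.
  destruct (Hbd X1 X2) as [HA1 HA2]. { rewrite dist2_refl; lra. }
  assert (Hpart : eta' / 2 * Rint (fun s => Rabs (delta e s)) (- e) e <= eps / 2).
  { replace (eps / 2) with (eta' / 2 * C) by (unfold eta'; field; lra).
    apply Rmult_le_compat_l; lra. }
  assert (Hpart2 : forall P, Rabs P <= M -> Rabs (/ 2 * P * Rint (delta e) (- e) e - / 2 * P) < eps / 2).
  { intros P HP. replace (/ 2 * P * Rint (delta e) (- e) e - / 2 * P) with (/ 2 * P * (Rint (delta e) (- e) e - 1)) by ring.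
    rewrite !Rabs_mult, Rabs_inv, (Rabs_right 2) by lra.
    pose proof (Rabs_pos (Rint (delta e) (- e) e - 1)). pose proof (Rabs_pos P).
    assert (/ 2 * Rabs P * Rabs (Rint (delta e) (- e) e - 1) <= / 2 * M * eta1).
    { apply Rmult_le_compat; try lra; apply Rmult_le_compat_l; lra. }
    assert (/ 2 * M * eta1 < eps / 2).
    { unfold eta1. replace (/ 2 * M * (eps / (M + 1))) with (eps / 2 * (M / (M + 1))) by (field; lra).
      assert (M / (M + 1) < 1). { apply (Rmult_lt_reg_r (M + 1)); [lra|].
        replace (M / (M + 1) * (M + 1)) with M by (field; lra). lra. }
      nra. }
    lra. }
  assert (Z1 : Rabs (Deriv (x1 e X1 X2) e - / 2 * P1_2 f X1 X2) < eps).
  { replace (Deriv (x1 e X1 X2) e - / 2 * P1_2 f X1 X2) with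
      ((Deriv (x1 e X1 X2) e - / 2 * P1_2 f X1 X2 * Rint (delta e) (- e) e) +
       (/ 2 * P1_2 f X1 X2 * Rint (delta e) (- e) e - / 2 * P1_2 f X1 X2)) by ring.
    eapply Rle_lt_trans; [apply Rabs_triang|]. pose proof (Hpart2 _ HA1). lra. }
  assert (Z2 : Rabs (Deriv (x2 e X1 X2) e - / 2 * P2_2 f X1 X2) < eps).
  { replace (Deriv (x2 e X1 X2) e - / 2 * P2_2 f X1 X2) with
      ((Deriv (x2 e X1 X2) e - / 2 * P2_2 f X1 X2 * Rint (delta e) (- e) e) +
       (/ 2 * P2_2 f X1 X2 * Rint (delta e) (- e) e - / 2 * P2_2 f X1 X2)) by ring.
    eapply Rle_lt_trans; [apply Rabs_triang|]. pose proof (Hpart2 _ HA2). lra. }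
  assert (HU0 : U <> 0) by lra.
  assert (L1 : Deriv (fun u => x1_lim f X1 X2 u) U = if Rlt_dec 0 U then / 2 * P1_2 f X1 X2 else 0).
  { apply Deriv_ext with (h := fun u => X1 + 0 * Heav u + / 2 * P1_2 f X1 X2 * Uplus u).
    intros; unfold x1_lim; ring. apply lim_d; auto. }
  assert (L2 : Deriv (fun u => x2_lim f X1 X2 u) U = if Rlt_dec 0 U then / 2 * P2_2 f X1 X2 else 0).
  { apply Deriv_ext with (h := fun u => X2 + 0 * Heav u + / 2 * P2_2 f X1 X2 * Uplus u).
    intros; unfold x2_lim; ring. apply lim_d; auto. }
  assert (L3 : Deriv (fun u => v_lim f X1 X2 V u) U =
     if Rlt_dec 0 U then / 4 * ((P1_2 f X1 X2) ^ 2 + (P2_2 f X1 X2) ^ 2) else 0).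
  { apply Deriv_ext with (h := fun u => V + f X1 X2 * Heav u + / 4 * ((P1_2 f X1 X2) ^ 2 + (P2_2 f X1 X2) ^ 2) * Uplus u).
    intros; unfold v_lim; ring. apply lim_d; auto. }
  assert (L4 : Deriv (fun u => w_lim f X1 X2 V u) U =
     if Rlt_dec 0 U then / 4 * ((P1_2 f X1 X2) ^ 2 + (P2_2 f X1 X2) ^ 2) else 0).
  { apply Deriv_ext with (h := fun u => V + 0 * Heav u + / 4 * ((P1_2 f X1 X2) ^ 2 + (P2_2 f X1 X2) ^ 2) * Uplus u).
    intros; unfold w_lim; ring. apply lim_d; auto. }
  unfold dU4, dist4, pU, pX1, pX2, pV, t_eps, t_lim, s_eps, s_lim.
  rewrite E1, E2, E3, E4, L1, L2, L3, L4, !Rminus_diag, Rabs_R0.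
  assert (Hfin : Rabs (Deriv (x1 e X1 X2) U - (if Rlt_dec 0 U then / 2 * P1_2 f X1 X2 else 0)) < eta /\
    Rabs (Deriv (x2 e X1 X2) U - (if Rlt_dec 0 U then / 2 * P2_2 f X1 X2 else 0)) < eta /\
    Rabs (Deriv (x1 e X1 X2) U * Deriv (x1 e X1 X2) U + Deriv (x2 e X1 X2) U * Deriv (x2 e X1 X2) U -
      (if Rlt_dec 0 U then / 4 * ((P1_2 f X1 X2) ^ 2 + (P2_2 f X1 X2) ^ 2) else 0)) < eta).
  { destruct (Rlt_dec 0 U) as [Hp|Hn].
    - destruct (z_right f delta x1 x2 e X1 X2 Hdz Hode U ltac:(lra)) as [R1 R2].
      rewrite R1, R2.
      assert (eps < eta) by (assert (eps * 1 <= eps * (M + 1)) by (apply Rmult_le_compat_l; lra); lra).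
      split; [lra|]. split; [lra|].
      replace (Deriv (x1 e X1 X2) e * Deriv (x1 e X1 X2) e + Deriv (x2 e X1 X2) e * Deriv (x2 e X1 X2) e -
        / 4 * (P1_2 f X1 X2 ^ 2 + P2_2 f X1 X2 ^ 2)) with
        ((Deriv (x1 e X1 X2) e * Deriv (x1 e X1 X2) e - (/ 2 * P1_2 f X1 X2) * (/ 2 * P1_2 f X1 X2)) +
         (Deriv (x2 e X1 X2) e * Deriv (x2 e X1 X2) e - (/ 2 * P2_2 f X1 X2) * (/ 2 * P2_2 f X1 X2))) by (field).
      eapply Rle_lt_trans; [apply Rabs_triang|].
      assert (Rabs (/ 2 * P1_2 f X1 X2) <= M / 2) by (rewrite Rabs_mult, Rabs_inv, (Rabs_right 2); lra).
      assert (Rabs (/ 2 * P2_2 f X1 X2) <= M / 2) by (rewrite Rabs_mult, Rabs_inv, (Rabs_right 2); lra).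
      pose proof (sq_lemma _ _ eps M Z1 H0 ltac:(lra) ltac:(lra)).
      pose proof (sq_lemma _ _ eps M Z2 H1 ltac:(lra) ltac:(lra)).
      lra.
    - destruct (z_zero_left f delta x1 x2 e X1 X2 He Hdz Hode U ltac:(lra)) as [R1 R2].
      rewrite R1, R2. rewrite !Rmult_0_l, !Rplus_0_l, !Rminus_0_r, Rabs_R0. lra. }
  destruct Hfin as [F1 [F2 F3]].
  split; apply Rmax_lub_lt; apply Rmax_lub_lt; lra.
Qed.
End Main.

Theorem proposition7p1
  (f : R -> R -> R) (delta : R -> R -> R) (x1 x2 : R -> R -> R -> R -> R)
  (Hf : smooth2 f)
  (Hdelta : strict_delta_net delta)
  (Hxsmooth : forall e, 0 < e <= 1 -> smooth3 (x1 e) /\ smooth3 (x2 e))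
  (Hxode : forall K : R * R -> Prop, compact_in dist2 K ->
     exists eK, 0 < eK /\
       forall e X1 X2, 0 < e <= 1 -> e <= eK -> K (X1, X2) ->
         solves_ode f delta x1 x2 e X1 X2) :
  unif_cv_on_compacts (fun e => dU4 (t_eps f delta x1 x2 e)) (dU4 (t_lim f))
    (fun p => pU p <> 0) /\
  unif_cv_on_compacts (fun e => dU4 (s_eps f delta x1 x2 e)) (dU4 (s_lim f))
    (fun p => pU p <> 0).
Proof.
  split; intros K HK HD eta Heta;
  destruct (core f delta x1 x2 Hf Hdelta Hxsmooth Hxode K HK HD eta Heta) as [e0 [He0 H]];
  exists e0; split; auto; intros e p He Hee Hp; destruct (H e p He Hee Hp); auto.
Qed.
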